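(* Let $X$ be a separable real Banach space and let $(\Omega,\beta,\mu)$ be a complete probability measure space. Let $T:\Omega\times X\to X$ be a continuous random mapping such that there are real-valued random variables $\alpha_1,\alpha_2,\alpha_3:\Omega\to[0,\infty)$ with $\alpha_1(\omega)+\alpha_2(\omega)+\alpha_3(\omega)<1$ for all $\omega\in\Omega$ and, for every $\omega\in\Omega$ and all $X$-valued random variables $x_1,x_2:\Omega\to X$, $$\|T(\omega,x_1(\omega))-T(\omega,x_2(\omega))\|\le \alpha_1(\omega)\|x_1(\omega)-x_2(\omega)\|+\alpha_2(\omega)\|x_1(\omega)-T(\omega,x_1(\omega))\|+\alpha_3(\omega)\|x_2(\omega)-T(\omega,x_2(\omega))\|.$$ Then $T$ has a random fixed point, and it is unique (any two random fixed points of $T$ coincide almost surely).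
   Context: An $X$-valued random variable is a map $x:\Omega\to X$ such that $x^{-1}(B)\in\beta$ for every Borel set $B\subseteq X$. A random mapping is a map $T:\Omega\times X\to X$ such that $\omega\mapsto T(\omega,x)$ is an $X$-valued random variable for every fixed $x\in X$. A random mapping $T$ is continuous if the set of $\omega\in\Omega$ for which $x\mapsto T(\omega,x)$ is continuous has $\mu$-measure one. A random fixed point of $T$ is an $X$-valued random variable $x$ with $\mu\{\omega\in\Omega: T(\omega,x(\omega))=x(\omega)\}=1$. *)

(* Defs.v *)
From HB Require Import structures.
From mathcomp Require Import all_boot all_order all_algebra.
From mathcomp Require Import all_classical all_reals all_analysis.
Set Implicit Arguments. Unset Strict Implicit. Unset Printing Implicit Defensive.
Import Order.TTheory GRing.Theory Num.Theory.
Import numFieldNormedType.Exports.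
Local Open Scope classical_set_scope.
Local Open Scope ring_scope.

Definition borel_sets (X : topologicalType) : set (set X) :=
  <<s setT, @open X >>.

Definition separable_space (X : topologicalType) : Prop :=
  exists D : set X, countable D /\ dense D.

Definition complete_measure d (T : measurableType d) (R : realType)
  (mu : set T -> \bar R) : Prop :=
  forall N : set T, measurable N -> mu N = 0%E ->
    forall A : set T, A `<=` N -> measurable A.

Definition X_random_variable d (T : measurableType d) (X : topologicalType)
  (x : T -> X) : Prop :=
  forall B : set X, borel_sets B -> measurable (x @^-1` B).

Definition full_measure d (T : measurableType d) (R : realType)
  (mu : set T -> \bar R) (S : set T) : Prop :=
  measurable S /\ mu S = 1%E.

Definition random_mapping d (T : measurableType d) (X : topologicalType)
  (F : T -> X -> X) : Prop :=
  forall x : X, X_random_variable (fun w => F w x).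

Definition continuous_random_mapping d (T : measurableType d) (R : realType)
  (mu : set T -> \bar R) (X : topologicalType) (F : T -> X -> X) : Prop :=
  random_mapping F /\ full_measure mu [set w | continuous (F w)].

Definition random_fixed_point d (T : measurableType d) (R : realType)
  (mu : set T -> \bar R) (X : topologicalType) (F : T -> X -> X)
  (x : T -> X) : Prop :=
  X_random_variable x /\ full_measure mu [set w | F w (x w) = x w].

(* Main.v *)
Require Import Defs.
From HB Require Import structures.
From mathcomp Require Import all_boot all_order all_algebra.
From mathcomp Require Import all_classical all_reals all_analysis.
From mathcomp Require Import unstable.
From mathcomp Require Import lra ring.
From mathcomp Require Import measurable_realfun.
Import Order.TTheory GRing.Theory Num.Theory.
Import numFieldNormedType.Exports.
Local Open Scope classical_set_scope.
Local Open Scope ring_scope.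
Lemma geo_dist (R : realType) (X : completeNormedModType R) (y : nat -> X)
  (q : {nonneg R}) (c : R) : q%:num < 1 -> 0 <= c ->
  (forall k, `|y k.+1 - y k| <= q%:num ^+ k * c) ->
  forall n m, `|y n - y (n + m)%N| <= c / (1 - q%:num) * q%:num ^+ n.
Proof.
move=> q1 c0 f1 n m.
have /le_trans -> // : `| y n - y (n + m)%N| <=
    series (geometric (c * q%:num ^+ n) q%:num) m.
  elim: m => [|m ih].
    by rewrite geometric_seriesE ?lt_eqF//= addn0 subrr normr0 subrr mulr0 mul0r.
  rewrite (le_trans (ler_distD (y (n + m)%N) _ _))//.
  apply: (le_trans (lerD ih _)); first by rewrite distrC addnS; exact: f1.
  rewrite [_ * c]mulrC exprD mulrA geometric_seriesE ?lt_eqF//=.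
  pose q' := Itv01 [elaborate ge0 q] (ltW q1).
  rewrite -[q%:num]/(q'%:num) -!mulrA -mulrDr ler_pM// {}/q'/=.
  rewrite -!/(_.~) -mulrDr exprSr onemM -addrA.
  rewrite -[in leRHS](mulrC _ (_ ^+ m).~) -onemMr onemK.
  by rewrite [in leRHS]mulrDl mulrAC mulfV ?mul1r// gt_eqF// onem_gt0.
rewrite geometric_seriesE ?lt_eqF//= -[leRHS]mulr1 (ACl (1*4*2*3))/=.
by rewrite ler_wpM2l// ?mulr_ge0// ?invr_ge0 ?subr_ge0 ?ltW//.

Qed.

Lemma geo_cvg (R : realType) (X : completeNormedModType R) (y : nat -> X)
  (q : {nonneg R}) (c : R) : q%:num < 1 -> 0 <= c ->
  (forall k, `|y k.+1 - y k| <= q%:num ^+ k * c) -> cvgn y.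
Proof.
move=> q1 c0 f1.
set C := c / (1 - q%:num).
have C_ge0 : 0 <= C by rewrite mulr_ge0// invr_ge0 subr_ge0 ltW.
apply/cauchy_cvgP; apply/cauchy_ballP => _/posnumP[e]; near_simpl.
have lt_min n m : `|y n - y m| <= C * q%:num ^+ minn n m.
  wlog : n m / (n <= m)%N => W.
    by case/orP: (leq_total n m) => /W //; rewrite distrC minnC.
  by rewrite (minn_idPl _)// (le_trans _ (@geo_dist _ _ y q c q1 c0 f1 _ (m - n)))// subnKC.
case: ltrgt0P C_ge0 => // [Cpos|C0] _; last first.
  near=> n m => /=; rewrite -ball_normE.
  by apply: (le_lt_trans (lt_min _ _)); rewrite C0 mul0r.
near=> n; rewrite -ball_normE /= (le_lt_trans (lt_min n.1 n.2)) //.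
rewrite // -ltr_pdivlMl //.
suff : ball 0 (C^-1 * e%:num) (q%:num ^+ minn n.1 n.2).
  by rewrite /ball /= sub0r normrN ger0_norm.
near: n; rewrite nbhs_simpl.
pose g := fun w : nat * nat => q%:num ^+ minn w.1 w.2.
have := @fcvg_ball _ _ (g @ filter_prod \oo \oo) _ 0 _ (C^-1 * e%:num).
move: (@cvg_geometric _ 1 q%:num); rewrite ger0_norm // => /(_ q1) geo.
near_simpl; apply; last by rewrite mulr_gt0 // invr_gt0.
apply/cvg_ballP => _/posnumP[delta]; near_simpl.
have [N _ Q] : \forall N \near \oo, ball 0 delta%:num (geometric 1 q%:num N).
  exact: (@fcvg_ball R R _ _ 0 geo).
exists ([set n | N <= n], [set n | N <= n])%N; first by split; exists N.
move=> [n m] [Nn Nm]; rewrite /ball /= sub0r normrN ger0_norm /g //.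
apply: le_lt_trans; last by apply: (Q N) => /=.
rewrite sub0r normrN ger0_norm /geometric //= mul1r.
by rewrite ler_wiXn2l // ?ltW // leq_min Nn.
Unshelve. all: end_near. Qed.
Lemma reich_fix (R : realType) (X : completeNormedModType R) (G : X -> X)
  (b1 b2 b3 : R) : 0 <= b1 -> 0 <= b2 -> 0 <= b3 -> b1 + b2 + b3 < 1 ->
  (forall u v, `|G u - G v| <= b1 * `|u - v| + b2 * `|u - G u| + b3 * `|v - G v|) ->
  exists z, G z = z.
Proof.
move=> h1 h2 h3 hs H.
pose y := fun n => iter n G 0.
have b2lt : 0 < 1 - b2 by lra.
pose k := (b1 + b3) / (1 - b2).
have k0 : 0 <= k by rewrite /k; apply: mulr_ge0; [lra|rewrite invr_ge0; lra].
have k1 : k < 1 by rewrite /k ltr_pdivrMr // mul1r; lra.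
have step n : `|y n.+2 - y n.+1| <= k * `|y n.+1 - y n|.
  have := H (y n.+1) (y n).
  rewrite /k mulrAC ler_pdivlMr //.
  have -> : G (y n.+1) = y n.+2 by [].
  have -> : G (y n) = y n.+1 by [].
  rewrite (distrC (y n.+1) (y n.+2)) (distrC (y n) (y n.+1)) => HH.
  have := normr_ge0 (y n.+2 - y n.+1); have := normr_ge0 (y n.+1 - y n).
  nra.
have geo n : `|y n.+1 - y n| <= (NngNum k0)%:num ^+ n * `|y 1 - y 0|.
  elim: n => [|n IH] /=; first by rewrite expr0 mul1r.
  apply: (le_trans (step n)); rewrite exprS -mulrA ler_wpM2l //.
have /cvg_ex [z yz] := @geo_cvg _ _ y (NngNum k0) _ k1 (normr_ge0 _) geo.
exists z; apply/eqP; rewrite eq_sym -subr_eq0 -normr_eq0; apply/eqP.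
have b3lt : 0 < 1 - b3 by lra.
suff : (1 - b3) * `|z - G z| <= 0.
  by move=> HH; apply/le_anti; rewrite normr_ge0 andbT -(pmulr_rle0 _ b3lt).
apply/ler_gtP => e e0.
have /cvgrPdist_lt/(_ (e / 4)) := yz.
have e4 : 0 < e / 4 by rewrite divr_gt0.
move=> /(_ e4) [N _ HN].
have hN := HN N (leqnn N); have hN1 := HN N.+1 (leqnSn N).
rewrite /= in hN hN1.
have T1 := ler_distD (y N.+1) z (G z).
have T2 := ler_distD z (y N) (y N.+1).
have HH := H (y N) z.
rewrite (_ : G (y N) = y N.+1) // in HH.
rewrite (distrC (y N) z) (distrC (y N.+1) (G z)) in T2 HH * => {HN}.
rewrite (distrC (y N) (y N.+1)) in T2 HH.
rewrite (distrC (y N.+1) (G z)) in T1.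
have := normr_ge0 (z - y N); have := normr_ge0 (z - y N.+1);
have := normr_ge0 (y N.+1 - y N); have := normr_ge0 (z - G z).
nra.
Qed.
Section det.
Context (R : realType) (X : completeNormedModType R) (G : X -> X) (b1 b2 b3 : R).
Hypotheses (h1 : 0 <= b1) (h2 : 0 <= b2) (h3 : 0 <= b3) (hs : b1 + b2 + b3 < 1).
Hypothesis H : forall u v,
  `|G u - G v| <= b1 * `|u - v| + b2 * `|u - G u| + b3 * `|v - G v|.

Lemma reich_uniq u v : G u = u -> G v = v -> u = v.
Proof.
move: (h1) (h2) (h3) (hs) => h1' h2' h3' hs'.
move=> Gu Gv; have := H u v; rewrite Gu Gv !subrr normr0 !mulr0 !addr0 => HH.
apply/eqP; rewrite -subr_eq0 -normr_eq0; apply/eqP.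
apply/le_anti; rewrite normr_ge0 andbT.
have b1l : b1 < 1 by lra.
have := normr_ge0 (u - v); nra.
Qed.

Lemma reich_bound1 z u : G z = z -> (1 - b1) * `|u - z| <= (1 + b2) * `|u - G u|.
Proof.
move: (h1) (h2) (h3) (hs) => h1' h2' h3' hs'.
move=> Gz; have := H u z; rewrite Gz subrr normr0 mulr0 addr0 => HH.
have T := ler_distD (G u) u z.
rewrite (distrC (G u) z) in HH; rewrite (distrC (G u) z) in T.
have := normr_ge0 (u - z); have := normr_ge0 (u - G u); nra.
Qed.

Lemma reich_bound2 z u : G z = z -> (1 - b3) * `|u - G u| <= (1 + b1) * `|u - z|.
Proof.
move: (h1) (h2) (h3) (hs) => h1' h2' h3' hs'.
move=> Gz; have := H z u; rewrite Gz subrr normr0 mulr0 addr0 => HH.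
have T := ler_distD z u (G u).
rewrite (distrC z u) in HH.
have := normr_ge0 (u - z); have := normr_ge0 (u - G u); nra.
Qed.

Lemma reich_ball (dd : nat -> X)
  (dense_dd : forall p (eps : R), 0 < eps -> exists j, `|p - dd j| < eps)
  z (e : X) (r : R) : G z = z ->
  (`|e - z| < r <-> exists j,
     (1 - b1) * (`|dd j - e| - r) + (1 + b2) * `|dd j - G (dd j)| < 0).
Proof.
move: (h1) (h2) (h3) (hs) => h1' h2' h3' hs'.
move=> Gz; split.
- move=> ezr.
  pose del := r - `|e - z|.
  have del0 : 0 < del by rewrite /del; lra.
  pose c := 1 - b3. have c0 : 0 < c by rewrite /c; lra.
  pose m := c * (1 - b1). have m0 : 0 < m by rewrite /m mulr_gt0 //; lra.
  pose eps := m * del / (m + 8).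
  have m8 : 0 < m + 8 by lra.
  have eps0 : 0 < eps by rewrite /eps divr_gt0 // mulr_gt0.
  have epsE : eps * (m + 8) = m * del by rewrite /eps mulfVK // gt_eqF.
  have [j hj] := dense_dd z eps eps0.
  exists j.
  have B2 := @reich_bound2 z (dd j) Gz.
  have T := ler_distD z (dd j) e.
  rewrite (distrC (dd j) z) (distrC z e) in T.
  rewrite -/c (distrC (dd j) z) in B2.
  set g := `|dd j - G (dd j)| in B2 *.
  set a := `|dd j - e| in T *.
  set t := `|z - dd j| in hj T B2 *.
  have g0 : 0 <= g by apply: normr_ge0.
  have t0 : 0 <= t by apply: normr_ge0.
  have cg : c * g <= 2 * t by apply: (le_trans B2); apply: ler_wpM2r => //; lra.
  have hneg : m * (a - r) + (1 + b2) * (c * g) < 0.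
    have X1 : m * (a - r) <= m * (eps - del).
      by apply: ler_wpM2l; [lra|rewrite /del; lra].
    have X2 : (1 + b2) * (c * g) <= 2 * (2 * eps).
      apply: (le_trans (y := 2 * (c * g))).
        apply: ler_wpM2r; [by rewrite mulr_ge0 //; lra| lra].
      apply: ler_wpM2l; [lra|]. apply: (le_trans cg); apply: ler_wpM2l; lra.
    nra.
  have : c * ((1 - b1) * (a - r) + (1 + b2) * g) < 0.
    have -> : c * ((1 - b1) * (a - r) + (1 + b2) * g) = m * (a - r) + (1 + b2) * (c * g)
      by rewrite /m; ring.
    by [].
  by rewrite pmulr_rlt0.
- move=> [j hj].
  have B1 := @reich_bound1 z (dd j) Gz.
  have T := ler_distD (dd j) e z.
  rewrite (distrC e (dd j)) in T.
  have := normr_ge0 (dd j - z); have := normr_ge0 (e - z); nra.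
Qed.
End det.

Theorem corollary3p3 (R : realType) (X : completeNormedModType R)
  (d : measure_display) (Omega : measurableType d) (P : probability Omega R)
  (F : Omega -> X -> X) (a1 a2 a3 : Omega -> R) :
  separable_space X ->
  complete_measure P ->
  continuous_random_mapping P F ->
  measurable_fun setT a1 -> measurable_fun setT a2 -> measurable_fun setT a3 ->
  (forall w, 0 <= a1 w) -> (forall w, 0 <= a2 w) -> (forall w, 0 <= a3 w) ->
  (forall w, a1 w + a2 w + a3 w < 1) ->
  (forall (w : Omega) (x1 x2 : Omega -> X),
      X_random_variable x1 -> X_random_variable x2 ->
      `|F w (x1 w) - F w (x2 w)| <=
        a1 w * `|x1 w - x2 w| + a2 w * `|x1 w - F w (x1 w)|
        + a3 w * `|x2 w - F w (x2 w)|) ->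
  (exists x : Omega -> X, random_fixed_point P F x) /\
  (forall x y : Omega -> X, random_fixed_point P F x -> random_fixed_point P F y ->
     full_measure P [set w | x w = y w]).
Proof.
move=> sep cmp [rm _] ma1 ma2 ma3 p1 p2 p3 hs H.
have cst_rv (u : X) : X_random_variable (fun _ : Omega => u).
  move=> B _.
  rewrite (_ : (fun _ : Omega => u) @^-1` B = if u \in B then setT else set0);
    last exact: preimage_cst.
  by case: ifP => _; [exact: measurableT | exact: measurable0].
have Hw w u v : `|F w u - F w v| <=
    a1 w * `|u - v| + a2 w * `|u - F w u| + a3 w * `|v - F w v|.
  exact (H w (fun=> u) (fun=> v) (cst_rv u) (cst_rv v)).
have exz w : exists z, F w z = z.
  exact: (@reich_fix _ _ (F w) (a1 w) (a2 w) (a3 w) (p1 w) (p2 w) (p3 w) (hs w) (Hw w)).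
have uniqw w u v : F w u = u -> F w v = v -> u = v.
  exact: (@reich_uniq _ _ (F w) (a1 w) (a2 w) (a3 w) (p1 w) (p2 w) (p3 w) (hs w) (Hw w)).
split.
  pose x w := projT1 (cid (exz w)).
  have xfix w : F w (x w) = x w := projT2 (cid (exz w)).
  exists x; split; last first.
    rewrite (_ : [set w | F w (x w) = x w] = setT).
      by split; [exact: measurableT | exact: probability_setT].
    by apply/seteqP; split => w //= _; exact: xfix.
  have [D [cD dD]] := sep.
  have [dd sdd] : exists dd : nat -> X, set_surj setT D dd by apply/pcard_surjP.
  have dense_dd : forall p (eps : R), 0 < eps -> exists j, `|p - dd j| < eps.
    move=> p eps e0.
    have [s [bps Ds]] := dD (ball p eps) (ex_intro _ p (ballxx p e0)) (ball_open p eps).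
    have [j _ js] := sdd s Ds.
    by exists j; rewrite js; rewrite -ball_normE in bps.
  have mg j : measurable_fun setT (fun w => `|dd j - F w (dd j)|).
    apply: (measurability _ (RGenInftyO.measurableE R)) => //.
    move=> _ [_ [r ->] <-].
    rewrite (_ : _ `&` _ = (fun w => F w (dd j)) @^-1` (ball (dd j) r)).
      apply: rm; apply: sub_sigma_algebra; exact: ball_open.
    apply/seteqP; split => w /=; rewrite -ball_normE /= ?in_itv /=.
      by case.
    by move=> h; split.
  have mball e r : measurable (x @^-1` ball e r).
    rewrite (_ : x @^-1` ball e r = \bigcup_j [set w | (1 - a1 w) * (`|dd j - e| - r)
        + (1 + a2 w) * `|dd j - F w (dd j)| < 0]).
      apply: bigcupT_measurable => j.
      have mf : measurable_fun setT (fun w => (1 - a1 w) * (`|dd j - e| - r)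
          + (1 + a2 w) * `|dd j - F w (dd j)|).
        apply: measurable_funD; apply: measurable_funM.
        - by apply: measurable_funB => //; exact: measurable_cst.
        - exact: measurable_cst.
        - by apply: measurable_funD => //; exact: measurable_cst.
        - exact: mg.
      have := mf measurableT _ (@measurable_itv _ `]-oo, 0[).
      by rewrite setTI; congr measurable.
    apply/seteqP; split => w /=.
      rewrite -ball_normE /= => hw.
      have [j hj] := (@reich_ball _ _ (F w) (a1 w) (a2 w) (a3 w) (p1 w) (p2 w) (p3 w)
        (hs w) (Hw w) dd dense_dd (x w) e r (xfix w)).1 hw.
      by exists j.
    move=> [j _ hj]; rewrite -ball_normE /=.
    apply: (@reich_ball _ _ (F w) (a1 w) (a2 w) (a3 w) (p1 w) (p2 w) (p3 w)
        (hs w) (Hw w) dd dense_dd (x w) e r (xfix w)).2.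
    by exists j.
  have mopen U : open U -> measurable (x @^-1` U).
    move=> oU.
    rewrite (_ : x @^-1` U = \bigcup_j \bigcup_n
        (if pselect (ball (dd j) (n.+1%:R^-1) `<=` U)
         then x @^-1` ball (dd j) (n.+1%:R^-1) else set0)).
      apply: bigcupT_measurable => j; apply: bigcupT_measurable => n.
      by destruct pselect; [exact: mball | exact: measurable0].
    apply/seteqP; split => w /=.
    - move=> Uxw.
      have : nbhs (x w) U by apply: open_nbhs_nbhs; split.
      case/nbhs_ballP => r r0 bU; rewrite /= in r0.
      have r2 : 0 < r / 2 by rewrite divr_gt0.
      have [N _ HN] := near_infty_natSinv_lt (PosNum r2).
      have hN := HN N (leqnn N); rewrite /= in hN.
      have e0 : 0 < N.+1%:R^-1 :> R by rewrite invr_gt0.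
      have [j hj] := dense_dd (x w) _ e0.
      exists j => //; exists N => //.
      destruct pselect as [sb|nb].
        by rewrite /preimage /= -ball_normE /= distrC.
      exfalso; apply: nb => t; rewrite -ball_normE /= => ht.
      apply: bU; rewrite -ball_normE /=.
      have := ler_distD (dd j) (x w) t.
      move=> T; apply: (le_lt_trans T); rewrite [r](splitr r).
      by apply: ltrD; apply: lt_trans hN.
    - move=> [j _ [n _]]; destruct pselect as [sub|ns] => //.
      move=> hb; exact (sub _ hb).
  move=> B; rewrite /borel_sets.
  apply: (@smallest_sub _ (sigma_algebra setT) (@open X)
    [set B | measurable (x @^-1` B)]).
    split.
    - by rewrite /= preimage_set0.
    - move=> A mA; rewrite /= setTD -preimage_setC; exact: measurableC.
    - by move=> A mA; rewrite /= preimage_bigcup; exact: bigcupT_measurable.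
  by move=> U oU; exact: mopen.
move=> x y [_ [mA PA]] [_ [mB PB]].
set A := [set w | F w (x w) = x w] in mA PA.
set B := [set w | F w (y w) = y w] in mB PB.
have mAB : measurable (~` (A `&` B)) by apply: measurableC; exact: measurableI.
have PC : P (~` A) = 0%E by rewrite probability_setC // PA subee.
have PD : P (~` B) = 0%E by rewrite probability_setC // PB subee.
have P0 : P (~` (A `&` B)) = 0%E.
  apply/le_anti; rewrite measure_ge0 andbT.
  rewrite setCI; apply: (le_trans (measureU2 P (measurableC mA) (measurableC mB))).
  rewrite (_ : (P (~` A) + P (~` B) = 0 + 0)%E); first by rewrite adde0.
  by congr (_ + _)%E; [exact: PC|exact: PD].
have sub : ~` [set w | x w = y w] `<=` ~` (A `&` B).
  by move=> w nxy [Aw Bw]; apply: nxy; exact: (uniqw w _ _ Aw Bw).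
have mS' := cmp _ mAB P0 _ sub.
have mS : measurable [set w | x w = y w] by rewrite -[X in measurable X]setCK; exact: measurableC.
split => //.
have PS' : P (~` [set w | x w = y w]) = 0%E.
  apply/le_anti; rewrite measure_ge0 andbT -P0.
  by apply: le_measure => //; rewrite inE.
have := probability_setC P mS'; rewrite setCK PS' sube0 => ->.
by [].
Qed.
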